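(* For every $\epsilon$, the class $\mathbf{RMM}_\epsilon$ is closed under complement, under inverse homomorphisms and under word quotients. That is, if $L\subseteq\Sigma^*$ belongs to $\mathbf{RMM}_\epsilon$, then so do $\Sigma^*\setminus L$, $h^{-1}(L)=\{x\in\Sigma^*: h(x)\in L\}$ for every monoid homomorphism $h:\Sigma^*\to\Sigma^*$, and $w^{-1}L=\{x: wx\in L\}$ and $Lw^{-1}=\{x: xw\in L\}$ for every $w\in\Sigma^*$.
   Context: A measure-many quantum finite automaton (MM-QFA) over a finite alphabet $\Sigma$ is a tuple $M=(Q,\Sigma,\{U_\sigma\}_{\sigma\in\Sigma\cup\{\$\}},q_0,Q_{acc},Q_{rej})$, where $Q$ is a finite set of states indexing an orthonormal basis $\{|q\rangle\}$ of $\mathbb{C}^Q$, $\$\notin\Sigma$ is an end-marker, each $U_\sigma$ is unitary, $q_0$ is the initial state, and $Q$ is partitioned into accepting halting states $Q_{acc}$, rejecting halting states $Q_{rej}$ and non-halting states $Q_{non}$; let $P_{acc},P_{rej},P_{non}$ be the orthogonal projections onto the spans of the corresponding basis vectors. On input $x\in\Sigma^*$ the machine processes the symbols of $x\$$ one at a time, maintaining a triple $(\psi,p_{acc},p_{rej})$ initialised to $(|q_0\rangle,0,0)$: on reading $\sigma$ it sets $\psi'=U_\sigma\psi$, adds $\|P_{acc}\psi'\|^2$ to $p_{acc}$ and $\|P_{rej}\psi'\|^2$ to $p_{rej}$, and replaces $\psi$ by $P_{non}\psi'$. The acceptance probability $p_M(x)$ is the final value of $p_{acc}$. $M$ accepts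 $L$ with cut-point $\lambda$ and margin $\epsilon>0$ if $p_M(x)>\lambda+\epsilon$ for $x\in L$ and $p_M(x)<\lambda-\epsilon$ for $x\notin L$. $\mathbf{RMM}_\epsilon$ is the class of languages accepted by some MM-QFA (with some cut-point) with margin at least $\epsilon$. *)

(* Defs.v *)
From HB Require Import structures.
From mathcomp Require Import all_boot all_order all_algebra.
From mathcomp Require Import spectral.
From mathcomp Require Import complex.
From mathcomp Require Import reals.
Set Implicit Arguments. Unset Strict Implicit. Unset Printing Implicit Defensive.
Import Order.TTheory GRing.Theory Num.Theory.
Local Open Scope ring_scope.

(* Measure-many QFA over alphabet Sigma.  States are 'I_n; the input alphabet
   extended by the end-marker $ is  option Sigma  (None = $).  Q_non is the
   complement of Q_acc :|: Q_rej. *)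
Record mmqfa (R : realType) (Sigma : finType) := MMQFA {
  qfa_n : nat;
  qfa_U : option Sigma -> 'M[R[i]]_qfa_n;
  qfa_unitary : forall s, qfa_U s \is unitarymx;
  qfa_q0 : 'I_qfa_n;
  qfa_acc : {set 'I_qfa_n};
  qfa_rej : {set 'I_qfa_n};
  qfa_disj : [disjoint qfa_acc & qfa_rej]
}.

Section MMQFA.
Variables (R : realType) (Sigma : finType) (M : mmqfa R Sigma).
Local Notation n := (qfa_n M).

Definition sqmod (z : R[i]) : R := (complex.Re z) ^+ 2 + (complex.Im z) ^+ 2.

Definition proj_prob (A : {set 'I_n}) (psi : 'cV[R[i]]_n) : R :=
  \sum_(q in A) sqmod (psi q 0).

Definition non_halting : {set 'I_n} := ~: (qfa_acc M :|: qfa_rej M).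

Definition proj_non (psi : 'cV[R[i]]_n) : 'cV[R[i]]_n :=
  \col_(q < n) (if q \in non_halting then psi q 0 else 0).

Definition init_vec : 'cV[R[i]]_n := \col_(q < n) (if q == qfa_q0 M then 1 else 0).

Definition qfa_step (st : 'cV[R[i]]_n * R * R) (s : option Sigma)
  : 'cV[R[i]]_n * R * R :=
  let: (psi, pa, pr) := st in
  let psi' := qfa_U M s *m psi in
  (proj_non psi', pa + proj_prob (qfa_acc M) psi', pr + proj_prob (qfa_rej M) psi').

Definition acc_prob (x : seq Sigma) : R :=
  (foldl qfa_step (init_vec, 0, 0) (rcons (map Some x) None)).1.2.

End MMQFA.

Definition accepts_with (R : realType) (Sigma : finType) (M : mmqfa R Sigma)
  (L : seq Sigma -> Prop) (lambda eps : R) : Prop :=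
  0 < eps /\
  forall x : seq Sigma,
    (L x -> lambda + eps < acc_prob M x) /\ (~ L x -> acc_prob M x < lambda - eps).

Definition RMM (R : realType) (Sigma : finType) (eps : R) (L : seq Sigma -> Prop) : Prop :=
  exists (M : mmqfa R Sigma) (lambda eps' : R), eps <= eps' /\ accepts_with M L lambda eps'.

Definition monoid_hom (Sigma : finType) (h : seq Sigma -> seq Sigma) : Prop :=
  h [::] = [::] /\ forall x y, h (x ++ y) = h x ++ h y.

(* Main.v *)
Require Import Defs.
From HB Require Import structures.
From mathcomp Require Import all_boot all_order all_algebra.
From mathcomp Require Import spectral complex reals ring lra.
From Stdlib Require Import FunctionalExtensionality Classical_Prop.
Import Order.TTheory GRing.Theory Num.Theory.
Local Open Scope ring_scope.
Set Implicit Arguments. Unset Strict Implicit. Unset Printing Implicit Defensive.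

Section Gen.
Variable R : realType.
Local Notation C := (R[i]).
Local Notation toC := (real_complex R).

Lemma sqmodC (z : C) : toC (sqmod z) = z * z^*.
Proof. by rewrite /sqmod add_Re2_Im2 normCK. Qed.

Lemma sqmod_ge0 (z : C) : 0 <= sqmod z.
Proof. by rewrite /sqmod addr_ge0 // sqr_ge0. Qed.

Lemma sqmodM (a b : C) : sqmod (a * b) = sqmod a * sqmod b.
Proof. by apply: (@complexI R); rewrite rmorphM /= !sqmodC rmorphM mulrACA. Qed.

Lemma sqmod0 : sqmod (0 : C) = 0.
Proof. by apply: (@complexI R); rewrite sqmodC mul0r rmorph0. Qed.

Lemma sqmod_eq0 (z : C) : sqmod z = 0 -> z = 0.
Proof.
move=> h; have : z * z^* = 0 by rewrite -sqmodC h rmorph0.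
by move/eqP; rewrite mulf_eq0 conjC_eq0 orbb => /eqP.
Qed.

Lemma sqmod_real (y : R) : sqmod (toC y) = y ^+ 2.
Proof. by rewrite /sqmod /= expr0n /= addr0. Qed.

Lemma sum_enum (V : nmodType) (T : finType) (F : T -> V) :
  \sum_(k < #|T|) F (enum_val k) = \sum_x F x.
Proof.
rewrite [RHS](reindex (@enum_val T (mem T))) //.
by exists enum_rank => x _; [rewrite enum_valK | rewrite enum_rankK].
Qed.

Section Vec.
Variable T : finType.
Implicit Types (u v w : T -> C).
Definition ev (y : T) : T -> C := fun x => (x == y)%:R.
Definition dotv u v : C := \sum_x (u x)^* * v x.
Definition appm (U : T -> T -> C) v : T -> C := fun x => \sum_y U x y * v y.
Definition linC (f : (T -> C) -> (T -> C)) :=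
  forall (J : finType) (c : J -> C) (g : J -> T -> C),
    f (fun z => \sum_y c y * g y z) = fun x => \sum_y c y * f (g y) x.
Definition isom (f : (T -> C) -> (T -> C)) := forall u v, dotv (f u) (f v) = dotv u v.
Definition colorth (U : T -> T -> C) := forall y z, \sum_x (U x y)^* * U x z = (y == z)%:R.
Definition prb (A : {set T}) v : R := \sum_(x in A) sqmod (v x).
Definition nrm v : R := \sum_x sqmod (v x).
Definition scl (c : C) v : T -> C := fun x => c * v x.

Lemma sum_pred1 (F : T -> C) y : \sum_x (x == y)%:R * F x = F y.
Proof.
rewrite (bigD1 y) //= eqxx mul1r big1 ?addr0 // => x /negbTE ->; exact: mul0r.
Qed.

Lemma vdecomp v : v = fun z => \sum_y v y * ev y z.
Proof.
apply: functional_extensionality => z; rewrite /ev.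
under eq_bigr do rewrite mulrC eq_sym.
by rewrite sum_pred1.
Qed.

Lemma dot_ev y v : dotv (ev y) v = v y.
Proof. rewrite /dotv /ev; under eq_bigr do rewrite conjC_nat. exact: sum_pred1. Qed.

Lemma appm_lin U : linC (appm U).
Proof.
move=> J c g; apply: functional_extensionality => x; rewrite /appm.
under eq_bigr do rewrite mulr_sumr.
rewrite exchange_big /=; apply: eq_bigr => y _.
by rewrite mulr_sumr; apply: eq_bigr => z _; rewrite mulrCA.
Qed.

Lemma appm_isom U : colorth U -> isom (appm U).
Proof.
move=> hU u v; rewrite /dotv /appm.
under eq_bigr do rewrite rmorph_sum mulr_suml.
rewrite exchange_big /=; apply: eq_bigr => y _.
under eq_bigr do rewrite mulr_sumr.
rewrite exchange_big /=.
transitivity (\sum_z (z == y)%:R * ((u y)^* * v z)); last exact: sum_pred1.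
apply: eq_bigr => z _; rewrite eq_sym -hU mulr_suml; apply: eq_bigr => x _.
rewrite rmorphM /=; ring.
Qed.

Lemma nrmC v : toC (nrm v) = dotv v v.
Proof. by rewrite /nrm raddf_sum; apply: eq_bigr => x _; rewrite mulrC -sqmodC. Qed.

Lemma nrm_ge0 v : 0 <= nrm v.
Proof. by apply: sumr_ge0 => x _; exact: sqmod_ge0. Qed.

Lemma prb_ge0 A v : 0 <= prb A v.
Proof. by apply: sumr_ge0 => x _; exact: sqmod_ge0. Qed.

Lemma nrm_ev y : nrm (ev y) = 1.
Proof. by apply: (@complexI R); rewrite nrmC dot_ev /ev eqxx rmorph1. Qed.

Lemma prb_scl A c v : prb A (scl c v) = sqmod c * prb A v.
Proof. by rewrite /prb mulr_sumr; apply: eq_bigr => x _; rewrite sqmodM. Qed.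

Lemma nrm_eq0 v : nrm v = 0 -> forall x, v x = 0.
Proof.
move=> h x; apply: sqmod_eq0.
by apply: (psumr_eq0P (P := predT) _ h) => // y _; exact: sqmod_ge0.
Qed.

Lemma comp_lin (f g : (T -> C) -> (T -> C)) : linC f -> linC g -> linC (fun P => f (g P)).
Proof. by move=> hf hg J c h; rewrite hg hf. Qed.

Lemma comp_isom (f g : (T -> C) -> (T -> C)) : isom f -> isom g -> isom (fun P => f (g P)).
Proof. by move=> hf hg u v; rewrite hf hg. Qed.

End Vec.

Lemma foldl_rel (A B S : Type) (f : A -> S -> A) (g : B -> S -> B) (P : A -> B -> Prop) :
  (forall a b s, P a b -> P (f a s) (g b s)) ->
  forall l a b, P a b -> P (foldl f a l) (foldl g b l).
Proof. by move=> h; elim=> [|s l IH] a b //= /(h _ _ s) /IH. Qed.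

Section GM.
Variable Sigma : finType.

Record gm (T : finType) := GM {
  gU : option Sigma -> T -> T -> C;
  gcol : forall s, colorth (gU s);
  gq0 : T; gA : {set T}; gR : {set T};
  gdisj : [disjoint gA & gR] }.

Section Sem.
Variables (T : finType) (G : gm T).
Definition gnon : {set T} := ~: (gA G :|: gR G).
Definition gpnon (v : T -> C) : T -> C := fun x => if x \in gnon then v x else 0.
Definition gstep (st : (T -> C) * R * R) (s : option Sigma) : (T -> C) * R * R :=
  let: (v, a, r) := st in
  let v' := appm (gU G s) v in (gpnon v', a + prb (gA G) v', r + prb (gR G) v').
Definition grun v l := foldl gstep (v, 0, 0) l.
Definition gacp (x : seq Sigma) := (grun (ev (gq0 G)) (rcons (map Some x) None)).1.2.

Lemma foldl_gstep l v a r : foldl gstep (v, a, r) l =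
  ((grun v l).1.1, a + (grun v l).1.2, r + (grun v l).2).
Proof.
elim: l v a r => [|s l IH] v a r /=; first by rewrite /grun /= !addr0.
by rewrite /grun /= IH [in RHS]IH /= !add0r !addrA.
Qed.

Lemma grun_cons v s l : grun v (s :: l) =
  let v' := appm (gU G s) v in
  ((grun (gpnon v') l).1.1, prb (gA G) v' + (grun (gpnon v') l).1.2,
   prb (gR G) v' + (grun (gpnon v') l).2).
Proof. by rewrite {1}/grun /= foldl_gstep !add0r. Qed.

Lemma nrm_app s v : nrm (appm (gU G s) v) = nrm v.
Proof. by apply: (@complexI R); rewrite !nrmC appm_isom //; exact: gcol. Qed.

Lemma in_gnon x : (x \in gnon) = (x \notin gA G) && (x \notin gR G).
Proof. by rewrite !inE negb_or. Qed.

Lemma nrm_split v : nrm v = nrm (gpnon v) + prb (gA G) v + prb (gR G) v.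
Proof.
rewrite /nrm /prb /gpnon !(big_mkcond (fun x => x \in _)) -!big_split /=.
apply: eq_bigr => x _; rewrite in_gnon.
case hA: (x \in gA G); case hR: (x \in gR G) => /=; rewrite ?sqmod0 ?addr0 ?add0r //.
by move: (disjointFr (gdisj G) hA); rewrite hR.
Qed.

Lemma conserv l v : nrm v = nrm (grun v l).1.1 + (grun v l).1.2 + (grun v l).2.
Proof.
elim: l v => [|s l IH] v; first by rewrite /grun /= !addr0.
rewrite grun_cons /= -(nrm_app s v) (nrm_split (appm _ _)) (IH (gpnon _)).
ring.
Qed.

Lemma grun_ge0 l v : 0 <= (grun v l).1.2 /\ 0 <= (grun v l).2.
Proof.
elim: l v => [|s l IH] v; first by rewrite /grun /= lexx.
rewrite grun_cons /=; have [h1 h2] := IH (gpnon (appm (gU G s) v)).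
by split; apply: addr_ge0 => //; exact: prb_ge0.
Qed.

Lemma grun_scl c l v :
  (grun (scl c v) l).1.1 = scl c (grun v l).1.1 /\
  (grun (scl c v) l).1.2 = sqmod c * (grun v l).1.2 /\
  (grun (scl c v) l).2 = sqmod c * (grun v l).2.
Proof.
elim: l v => [|s l IH] v; first by rewrite /grun /= mulr0.
have e1 : appm (gU G s) (scl c v) = scl c (appm (gU G s) v).
  apply: functional_extensionality => x; rewrite /appm /scl mulr_sumr.
  by apply: eq_bigr => y _; rewrite mulrCA.
have e2 : gpnon (scl c (appm (gU G s) v)) = scl c (gpnon (appm (gU G s) v)).
  by apply: functional_extensionality => x; rewrite /gpnon /scl; case: ifP; rewrite ?mulr0.
rewrite !grun_cons /= e1 e2; have [-> [-> ->]] := IH (gpnon (appm (gU G s) v)).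
by rewrite !prb_scl !mulrDr.
Qed.

Lemma gacp_bounds x : 0 <= gacp x <= 1.
Proof.
rewrite /gacp; set l := rcons _ _.
have := conserv l (ev (gq0 G)); rewrite nrm_ev.
have [h1 h2] := grun_ge0 l (ev (gq0 G)).
have h3 := nrm_ge0 (grun (ev (gq0 G)) l).1.1.
move=> h; apply/andP; split; lra.
Qed.

End Sem.
End GM.

Section Conv.
Variable Sigma : finType.

Lemma ofM_col (M : mmqfa R Sigma) s : colorth (fun x y => qfa_U M s x y).
Proof.
move=> y z; have /unitarymxP h := qfa_unitary M s.
have /matrixP /(_ y z) := mulmx1C h; rewrite !mxE => <-.
by apply: eq_bigr => x _; rewrite !mxE.
Qed.

Definition ofM (M : mmqfa R Sigma) : gm Sigma 'I_(qfa_n M) :=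
  @GM Sigma _ (fun s x y => qfa_U M s x y) (ofM_col (M:=M)) (qfa_q0 M) (qfa_acc M) (qfa_rej M) (qfa_disj M).

Lemma ofM_acc (M : mmqfa R Sigma) x : acc_prob M x = gacp (ofM M) x.
Proof.
rewrite /acc_prob /gacp /grun.
pose P (p : 'cV[C]_(qfa_n M) * R * R) (g : ('I_(qfa_n M) -> C) * R * R) :=
  (forall q, p.1.1 q 0 = g.1.1 q) /\ p.1.2 = g.1.2 /\ p.2 = g.2.
suff : P (foldl (qfa_step (M:=M)) (init_vec M, 0, 0) (rcons [seq Some i | i <- x] None))
         (foldl (gstep (ofM M)) (ev (gq0 (ofM M)), 0, 0) (rcons [seq Some i | i <- x] None)).
  by case=> _ [].
apply: foldl_rel; last by split=> // q; rewrite /init_vec mxE /ev /=; case: eqP.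
move=> [[p a] r] [[v a'] r'] s [/= hv [-> ->]] /=.
have hm : forall q, (qfa_U M s *m p) q 0 = appm (gU (ofM M) s) v q.
  by move=> q; rewrite mxE /appm /=; apply: eq_bigr => y _; rewrite hv.
split; [|split].
- by move=> q; rewrite /proj_non mxE /gpnon /gnon /non_halting /= hm.
- by congr (_ + _); apply: eq_bigr => q _; rewrite hm.
- by congr (_ + _); apply: eq_bigr => q _; rewrite hm.
Qed.

Section ToM.
Variables (T : finType) (G : gm Sigma T).

Lemma toM_unitary s :
  (\matrix_(i, j) gU G s (enum_val i) (enum_val j) : 'M[C]_#|T|) \is unitarymx.
Proof.
apply/unitarymxP; apply: mulmx1C; apply/matrixP => i j; rewrite !mxE.
transitivity (\sum_(k < #|T|) (gU G s (enum_val k) (enum_val i))^* * gU G s (enum_val k) (enum_val j)).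
  by apply: eq_bigr => k _; rewrite !mxE.
rewrite (sum_enum (fun x => (gU G s x (enum_val i))^* * gU G s x (enum_val j))).
by rewrite (gcol G) (inj_eq enum_val_inj).
Qed.

Lemma toM_disj : [disjoint [set i : 'I_#|T| | enum_val i \in gA G] & [set i | enum_val i \in gR G]].
Proof.
apply/pred0P => i /=; rewrite !inE.
by case hA: (enum_val i \in gA G) => //=; rewrite (disjointFr (gdisj G) hA).
Qed.

Definition toM : mmqfa R Sigma :=
  @MMQFA R Sigma #|T| (fun s => \matrix_(i, j) gU G s (enum_val i) (enum_val j)) toM_unitary
    (enum_rank (gq0 G)) [set i | enum_val i \in gA G] [set i | enum_val i \in gR G] toM_disj.

Lemma sum_enum_set (A : {set T}) (F : T -> R) :
  \sum_(i in [set i : 'I_#|T| | enum_val i \in A]) F (enum_val i) = \sum_(x in A) F x.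
Proof.
rewrite big_mkcond [RHS]big_mkcond /= -(sum_enum (fun x => if x \in A then F x else 0)).
by apply: eq_bigr => i _; rewrite inE.
Qed.

Lemma toM_acc x : gacp G x = acc_prob toM x.
Proof.
rewrite /acc_prob /gacp /grun.
pose P (g : (T -> C) * R * R) (p : 'cV[C]_#|T| * R * R) :=
  (forall i, p.1.1 i 0 = g.1.1 (enum_val i)) /\ g.1.2 = p.1.2 /\ g.2 = p.2.
suff : P (foldl (gstep G) (ev (gq0 G), 0, 0) (rcons [seq Some i | i <- x] None))
         (foldl (qfa_step (M:=toM)) (init_vec toM, 0, 0) (rcons [seq Some i | i <- x] None)).
  by case=> _ [].
apply: foldl_rel; last first.
  split=> // i; rewrite /init_vec mxE /ev /=.
  by rewrite -(inj_eq enum_val_inj) enum_rankK; case: eqP.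
move=> [[v a] r] [[p a'] r'] s [/= hv [-> ->]] /=.
have hm : forall i, (qfa_U toM s *m p) i 0 = appm (gU G s) v (enum_val i).
  move=> i; rewrite mxE /appm /= -(sum_enum (fun y => gU G s (enum_val i) y * v y)).
  by apply: eq_bigr => y _; rewrite hv mxE.
split; [|split].
- move=> i; rewrite /proj_non mxE /gpnon /gnon /non_halting /= hm.
  by rewrite !inE.
- congr (_ + _); rewrite /prb -sum_enum_set /proj_prob /=; apply: eq_bigr => i _; by rewrite hm.
- congr (_ + _); rewrite /prb -sum_enum_set /proj_prob /=; apply: eq_bigr => i _; by rewrite hm.
Qed.

End ToM.

Definition gaccepts T (G : gm Sigma T) (L : seq Sigma -> Prop) (lam e : R) :=
  0 < e /\ forall x, (L x -> lam + e < gacp G x) /\ (~ L x -> gacp G x < lam - e).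

Lemma RMM_of_gm (eps : R) (L : seq Sigma -> Prop) T (G : gm Sigma T) lam e :
  eps <= e -> gaccepts G L lam e -> RMM eps L.
Proof.
move=> he [e0 h]; exists (toM G), lam, e; split => //; split => // x.
by rewrite -toM_acc; exact: h.
Qed.

Lemma gm_of_RMM (eps : R) (L : seq Sigma -> Prop) : RMM eps L ->
  exists (M : mmqfa R Sigma) lam e, eps <= e /\ gaccepts (ofM M) L lam e.
Proof.
move=> [M [lam [e [he [e0 h]]]]]; exists M, lam, e; split => //; split => // x.
by rewrite -ofM_acc; exact: h.
Qed.

End Conv.

Section MK.
Variables (Sigma : finType) (T : finType).
Variable f : option Sigma -> (T -> C) -> (T -> C).
Hypothesis hl : forall s, linC (f s).
Hypothesis hi : forall s, isom (f s).

Definition mkU s (x y : T) : C := f s (ev y) x.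

Lemma mkU_col s : colorth (mkU s).
Proof.
move=> y z; rewrite /mkU.
by have := hi s (ev y) (ev z); rewrite dot_ev /dotv /ev => ->.
Qed.

Lemma mkU_app s v : appm (mkU s) v = f s v.
Proof.
rewrite [in RHS](vdecomp v) hl; apply: functional_extensionality => x.
by rewrite /appm /mkU; apply: eq_bigr => y _; rewrite mulrC.
Qed.

Definition mkgm q0 (A B : {set T}) (d : [disjoint A & B]) : gm Sigma T :=
  @GM Sigma T mkU mkU_col q0 A B d.
End MK.
Section Macro.
Variables (Sigma : finType) (T : finType) (G : gm Sigma T) (k : nat) (A' : {set T}).
Variable mic : option Sigma -> seq (option Sigma * {set T}).
Hypothesis hk : forall s, (size (mic s) <= k)%N.
Local Notation I := ('I_k.+1).
Local Notation T' := (T * 'I_k.+1)%type.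

Lemma sumT' (V : nmodType) (F : T' -> V) : \sum_x F x = \sum_(i : I) \sum_q F (q, i).
Proof. by rewrite [RHS]exchange_big pair_big /=; apply: eq_bigr => -[q i]. Qed.

Definition liftU (V : T -> T -> C) (P : T' -> C) : T' -> C :=
  fun x => if x.2 == ord0 then appm V (fun q => P (q, ord0)) x.1 else P x.
Definition sw (B : {set T}) (j : I) (x : T') : T' :=
  if x.1 \in B then (if x.2 == ord0 then (x.1, j) else if x.2 == j then (x.1, ord0) else x) else x.
Definition swp B j (P : T' -> C) : T' -> C := fun x => P (sw B j x).
Fixpoint mac (j : nat) (u : seq (option Sigma * {set T})) (P : T' -> C) : T' -> C :=
  if u is (t, B) :: u' then mac j.+1 u' (swp B (inord j) (liftU (gU G t) P)) else P.

Lemma sw_inv B j x : sw B j (sw B j x) = x.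
Proof.
case: x => q i; rewrite /sw /=.
case hq: (q \in B) => /=; last by rewrite hq.
case: (eqVneq i ord0) => [->|i0] /=.
  by rewrite hq; case: (eqVneq j ord0) => [->|j0] //=; rewrite ?eqxx ?(negbTE j0).
case: (eqVneq i j) => [->|ij] /=; first by rewrite hq ?eqxx.
by rewrite hq (negbTE i0) (negbTE ij).
Qed.

Lemma liftU_lin V : linC (liftU V).
Proof.
move=> J c g; apply: functional_extensionality => x; rewrite /liftU.
case: (x.2 == ord0) => //.
by rewrite (appm_lin V c (fun y q => g y (q, ord0))).
Qed.

Lemma swp_lin B j : linC (swp B j).
Proof. by []. Qed.

Lemma swp_isom B j : isom (swp B j).
Proof.
move=> P Q; rewrite /dotv /swp [RHS](reindex_inj (h := sw B j)) //.
exact: (can_inj (sw_inv B j)).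
Qed.

Lemma liftU_isom V : colorth V -> isom (liftU V).
Proof.
move=> hV P Q; rewrite /dotv sumT' [RHS]sumT' (bigD1 ord0) //= [in RHS](bigD1 ord0) //=.
congr (_ + _).
  have := appm_isom hV (fun q => P (q, ord0)) (fun q => Q (q, ord0)).
  by rewrite /dotv => <-; apply: eq_bigr => q _; rewrite /liftU /= ?eqxx.
apply: eq_bigr => i /negbTE hi; apply: eq_bigr => q _; by rewrite /liftU /= hi.
Qed.

Lemma mac_lin u j : linC (mac j u).
Proof.
elim: u j => [|[t B] u IH] j /=; first by [].
apply: (comp_lin (f := mac j.+1 u) (g := fun P => swp B (inord j) (liftU (gU G t) P))) => //.
exact: comp_lin (swp_lin _ _) (liftU_lin _).
Qed.

Lemma mac_isom u j : isom (mac j u).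
Proof.
elim: u j => [|[t B] u IH] j /=; first by [].
apply: (comp_isom (f := mac j.+1 u) (g := fun P => swp B (inord j) (liftU (gU G t) P))) => //.
exact: comp_isom (swp_isom _ _) (liftU_isom (gcol G t)).
Qed.

Fixpoint mres (v : T -> C) (u : seq (option Sigma * {set T})) : (T -> C) * R :=
  if u is (t, B) :: u' then
    let v' := appm (gU G t) v in
    let r := mres (fun q => if q \in B then 0 else v' q) u' in
    (r.1, prb (A' :&: B) v' + r.2)
  else (v, 0).

Definition accs (P : T' -> C) : R := \sum_(i : I | i != ord0) prb A' (fun q => P (q, i)).

Lemma prb0 (A : {set T}) : prb A (fun _ => 0) = 0.
Proof. by apply: big1 => q _; rewrite sqmod0. Qed.

Lemma mac_sim u : forall (j : nat) (P : T' -> C) (v : T -> C),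
  (0 < j)%N -> (j + size u <= k.+1)%N ->
  (forall q, P (q, ord0) = v q) ->
  (forall q (i : I), (j <= i)%N -> P (q, i) = 0) ->
  [/\ forall q, mac j u P (q, ord0) = (mres v u).1 q,
      forall q (i : I), (j + size u <= i)%N -> mac j u P (q, i) = 0 &
      accs (mac j u P) = accs P + (mres v u).2].
Proof.
elim: u => [|[t B] u IH] j P v j0 hj hP0 hPj /=.
  by split => //= [q i|]; rewrite ?addn0 ?addr0 //; apply: hPj.
have hjk : (j < k.+1)%N by move: hj; rewrite addnS; apply: leq_ltn_trans; rewrite leq_addr.
set J : I := inord j.
have hJ : nat_of_ord J = j by rewrite /J inordK.
have J0 : J != ord0 by rewrite -val_eqE /= hJ -lt0n.
set V := gU G t.
set P1 := swp B J (liftU V P).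
set v1 := fun q => if q \in B then 0 else appm V v q.
have hP0f : (fun q => P (q, ord0)) = v by apply: functional_extensionality.
have f0 : forall q, P1 (q, ord0) = v1 q.
  move=> q; rewrite /P1 /swp /sw /v1 /=; case: ifP => hq; rewrite ?eqxx /liftU /=.
    by rewrite (negbTE J0) hPj // hJ.
  by rewrite ?eqxx hP0f.
have fJ : forall q, P1 (q, J) = if q \in B then appm V v q else 0.
  move=> q; rewrite /P1 /swp /sw /=; case: ifP => hq; rewrite /liftU /=.
    by rewrite (negbTE J0) ?eqxx /= ?eqxx hP0f.
  by rewrite (negbTE J0) hPj // hJ.
have fo : forall q i, i != ord0 -> i != J -> P1 (q, i) = P (q, i).
  move=> q i hi hiJ; rewrite /P1 /swp /sw /=.
  by case: ifP => _; rewrite ?(negbTE hi) ?(negbTE hiJ) /liftU /= (negbTE hi).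
have hP1 : forall q (i : I), (j.+1 <= i)%N -> P1 (q, i) = 0.
  move=> q i hi; have hi0 : i != ord0 by rewrite -val_eqE /= -lt0n (leq_trans _ hi).
  have hiJ : i != J by rewrite -val_eqE /= hJ gtn_eqF.
  by rewrite fo // hPj // ltnW.
have hj1 : (j.+1 + size u <= k.+1)%N by rewrite addSn -addnS.
have [h1 h2 h3] := IH j.+1 P1 v1 (ltn0Sn j) hj1 f0 hP1.
split.
- exact: h1.
- by move=> q i hi; apply: h2; rewrite addSn -addnS.
rewrite h3 addrA; congr (_ + _).
rewrite /accs (bigD1 J) //= [in RHS](bigD1 J) //=.
have eS : \sum_(i < k.+1 | (i != ord0) && (i != J)) prb A' (fun q : T => P1 (q, i)) =
          \sum_(i < k.+1 | (i != ord0) && (i != J)) prb A' (fun q : T => P (q, i)).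
  apply: eq_bigr => i /andP [hi hiJ]; congr (prb _ _).
  by apply: functional_extensionality => q; rewrite fo.
have eP : prb A' (fun q => P (q, J)) = 0.
  rewrite -(prb0 A'); congr (prb _ _).
  by apply: functional_extensionality => q; rewrite hPj // hJ.
have eJ : prb A' (fun q => P1 (q, J)) = prb (A' :&: B) (appm V v).
  rewrite /prb big_mkcond [RHS]big_mkcond /=; apply: eq_bigr => q _.
  rewrite fJ inE; case: (q \in A'); case: (q \in B) => //=; by rewrite sqmod0.
by rewrite eS eP eJ add0r addrC.
Qed.

End Macro.
End Gen.


Section Gen2.
Variable R : realType.
Local Notation C := (R[i]).
Local Notation toC := (real_complex R).

Section MacroN.
Variables (Sigma : finType) (T : finType) (G : gm R Sigma T) (k : nat) (A' : {set T}).
Variable mic : option Sigma -> seq (option Sigma * {set T}).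
Hypothesis hk : forall s, (size (mic s) <= k)%N.
Local Notation T' := (T * 'I_k.+1)%type.

Definition Nacc : {set T'} := [set x | (x.2 != ord0) && (x.1 \in A')].
Definition Nrej : {set T'} := [set x | (x.2 != ord0) && (x.1 \notin A')].
Lemma Ndisj : [disjoint Nacc & Nrej].
Proof. by apply/pred0P => x /=; rewrite !inE; case: (x.2 != ord0); case: (x.1 \in A'). Qed.

Definition Nf (s : option Sigma) := mac G (k := k) 1 (mic s).
Lemma Nf_isom s : isom (Nf s). Proof. exact: mac_isom. Qed.
Lemma Nf_lin s : linC (Nf s). Proof. exact: mac_lin. Qed.

Definition NG : gm R Sigma T' := mkgm Nf_isom (gq0 G, ord0) Ndisj.

Definition emb (v : T -> C) : T' -> C := fun x => if x.2 == ord0 then v x.1 else 0.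
Definition mstep (m : (T -> C) * R) (s : option Sigma) : (T -> C) * R :=
  ((mres G A' m.1 (mic s)).1, m.2 + (mres G A' m.1 (mic s)).2).

Lemma prb_Nacc (P : T' -> C) : prb Nacc P = accs A' P.
Proof.
rewrite /prb /accs big_mkcond /= sumT' [RHS]big_mkcond /=.
apply: eq_bigr => i _; case: (eqVneq i ord0) => [->|hi] /=.
  by apply: big1 => q _; rewrite inE /= ?eqxx.
rewrite /prb [RHS]big_mkcond /=; apply: eq_bigr => q _; by rewrite inE /= hi.
Qed.

Lemma accs_emb v : accs A' (emb v) = 0.
Proof.
apply: big1 => i hi; rewrite /emb /= (negbTE hi); exact: prb0.
Qed.

Lemma NG_acc x : gacp NG x = (foldl mstep (ev R (gq0 G), 0) (rcons (map Some x) None)).2.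
Proof.
rewrite /gacp /grun.
pose P (g : (T' -> C) * R * R) (m : (T -> C) * R) := g.1.1 = emb m.1 /\ g.1.2 = m.2.
suff : P (foldl (gstep NG) (ev R (gq0 NG), 0, 0) (rcons [seq Some i | i <- x] None))
         (foldl mstep (ev R (gq0 G), 0) (rcons [seq Some i | i <- x] None)) by case.
apply: foldl_rel; last first.
  split => //=; apply: functional_extensionality => -[q i].
  by rewrite /ev /emb xpair_eqE /=; case: (i == ord0); rewrite ?andbT ?andbF.
move=> [[Q a] r] [v b] s [/= -> ->] /=.
have happ : appm (gU NG s) (emb v) = Nf s (emb v) by rewrite /= mkU_app //; exact: Nf_lin.
have hsz : (1 + size (mic s) <= k.+1)%N by rewrite add1n ltnS.
have h0 : forall q, emb v (q, ord0) = v q by move=> q; rewrite /emb /= ?eqxx.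
have hz : forall q (i : 'I_k.+1), (1 <= i)%N -> emb v (q, i) = 0.
  by move=> q i hi; rewrite /emb /=; case: eqP => // hi0; move: hi; rewrite hi0.
have [h1 h2 h3] := mac_sim G A' (ltn0Sn 0) hsz h0 hz.
rewrite happ; split.
- apply: functional_extensionality => -[q i]; rewrite /gpnon /gnon /= /Nacc /Nrej /emb !inE /=.
  case: (eqVneq i ord0) => [->|hi] /=; last by rewrite ?orbN.
  exact: h1.
- by rewrite prb_Nacc /Nf h3 accs_emb add0r.
Qed.

End MacroN.
End Gen2.


Section Gen3.
Variable R : realType.
Local Notation C := (R[i]).
Local Notation toC := (real_complex R).
Variables (Sigma : finType) (T : finType) (G : gm R Sigma T).
Local Notation halt := (~: gnon G).

Lemma gpnon_halt (v : T -> C) : (fun q => if q \in halt then 0 else v q) = gpnon G v.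
Proof. by apply: functional_extensionality => q; rewrite /gpnon inE; case: (q \in gnon G). Qed.

Lemma setA_halt : gA G :&: halt = gA G.
Proof. by apply/setP => q; rewrite !inE; case: (q \in gA G). Qed.

Lemma setnA_halt : ~: gA G :&: halt = gR G.
Proof.
apply/setP => q; rewrite !inE ?negbK.
case hA: (q \in gA G); case hR: (q \in gR G) => //=.
by move: (disjointFr (gdisj G) hA); rewrite hR.
Qed.

Lemma prb_nA (v : T -> C) : prb (~: gA G :&: setT) v = prb (gR G) v + nrm (gpnon G v).
Proof.
rewrite /prb /nrm /gpnon !(big_mkcond (fun x => x \in _)) -big_split /=.
apply: eq_bigr => x _; rewrite in_gnon !inE andbT.
case hA: (x \in gA G); case hR: (x \in gR G) => /=; rewrite ?sqmod0 ?addr0 ?add0r //.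
by move: (disjointFr (gdisj G) hA); rewrite hR.
Qed.

Definition micC (s : option Sigma) : seq (option Sigma * {set T}) :=
  if s is Some a then [:: (Some a, halt)] else [:: (None, setT)].
Lemma micC_hk s : (size (micC s) <= 1)%N. Proof. by case: s. Qed.
Definition NC := NG G 1 (~: gA G) micC.

Lemma NC_pref l (m : (T -> C) * R) (g : (T -> C) * R * R) :
  m.1 = g.1.1 -> m.2 = g.2 ->
  (foldl (mstep G (~: gA G) micC) m (map Some l)).1 = (foldl (gstep G) g (map Some l)).1.1 /\
  (foldl (mstep G (~: gA G) micC) m (map Some l)).2 = (foldl (gstep G) g (map Some l)).2.
Proof.
elim: l m g => [|a l IH] [v b] [[v' a'] r'] //= -> ->; apply: IH => /=.
  by rewrite gpnon_halt.
by rewrite setnA_halt addr0.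
Qed.

Lemma NC_acc x : gacp NC x = 1 - gacp G x.
Proof.
rewrite (@NG_acc R Sigma T G 1 (~: gA G) micC micC_hk) /gacp /grun !foldl_rcons.
have hc := conserv G (rcons (map Some x) None) (ev R (gq0 G)).
rewrite nrm_ev /grun foldl_rcons in hc.
have [] := NC_pref x (m := (ev R (gq0 G), 0)) (g := (ev R (gq0 G), 0, 0)) erefl erefl.
move: hc; case: (foldl (mstep _ _ _) _ _) => v b.
case: (foldl (gstep G) _ _) => [[v' a'] r'] /= hc -> ->.
rewrite prb_nA addr0; lra.
Qed.

Section Subst.
Variable g : option Sigma -> seq (option Sigma).
Definition kS : nat := \max_(s : option Sigma) size (g s).
Definition micS (s : option Sigma) : seq (option Sigma * {set T}) :=
  map (fun t => (t, halt)) (g s).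
Lemma micS_hk s : (size (micS s) <= kS)%N.
Proof. by rewrite size_map; exact: (leq_bigmax (F := fun s => size (g s))). Qed.
Definition NS := NG G kS (gA G) micS.

Lemma mres_sub u (v : T -> C) a r :
  (mres G (gA G) v (map (fun t => (t, halt)) u)).1 = (foldl (gstep G) (v, a, r) u).1.1 /\
  a + (mres G (gA G) v (map (fun t => (t, halt)) u)).2 = (foldl (gstep G) (v, a, r) u).1.2.
Proof.
elim: u v a r => [|t u IH] v a r /=; first by rewrite addr0.
rewrite gpnon_halt; have [-> <-] := IH (gpnon G (appm (gU G t) v)) (a + prb (gA G) (appm (gU G t) v))
  (r + prb (gR G) (appm (gU G t) v)).
by rewrite setA_halt addrA.
Qed.

Lemma NS_pref w (m : (T -> C) * R) (g0 : (T -> C) * R * R) :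
  m.1 = g0.1.1 -> m.2 = g0.1.2 ->
  (foldl (mstep G (gA G) micS) m w).2 = (foldl (gstep G) g0 (flatten (map g w))).1.2.
Proof.
elim: w m g0 => [|s w IH] [v b] [[v' a'] r'] /= h1 h2 //.
have [e1 e2] := mres_sub (g s) v' a' r'.
rewrite foldl_cat; apply: IH; rewrite /mstep /micS /= ?h1 ?h2 //.
Qed.

Lemma NS_acc x : gacp NS x =
  (foldl (gstep G) (ev R (gq0 G), 0, 0) (flatten (map g (rcons (map Some x) None)))).1.2.
Proof. by rewrite (@NG_acc R Sigma T G kS (gA G) micS micS_hk); apply: NS_pref. Qed.
End Subst.

Definition gHom (h : seq Sigma -> seq Sigma) (s : option Sigma) : seq (option Sigma) :=
  if s is Some a then map Some (h [:: a]) else [:: None].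
Definition gRq (w : seq Sigma) (s : option Sigma) : seq (option Sigma) :=
  if s is Some a then [:: Some a] else rcons (map Some w) None.

Lemma NS_hom h : monoid_hom h -> forall x, gacp (NS (gHom h)) x = gacp G (h x).
Proof.
move=> [h0 hc] x; rewrite NS_acc /gacp /grun; congr (foldl _ _ _).1.2.
rewrite map_rcons flatten_rcons -cats1 /=; congr (_ ++ _).
elim: x => [|a x IH] /=; first by rewrite h0.
by rewrite IH -map_cat -hc.
Qed.

Lemma NS_rq w x : gacp (NS (gRq w)) x = gacp G (x ++ w).
Proof.
rewrite NS_acc /gacp /grun; congr (foldl _ _ _).1.2.
rewrite map_rcons flatten_rcons /= map_cat rcons_cat; congr (_ ++ _).
by elim: x => [|a x IH] //=; rewrite IH.
Qed.

End Gen3.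


Section Gen4.
Variable R : realType.
Local Notation C := (R[i]).
Local Notation toC := (real_complex R).

Section Dot.
Variable T : finType.
Implicit Types (a b u : T -> C).
Lemma dotv_subr a b u (c : C) : dotv a (fun x => b x - c * u x) = dotv a b - c * dotv a u.
Proof.
rewrite /dotv mulr_sumr -sumrB; apply: eq_bigr => x _; ring.
Qed.
Lemma dotv_subl a b u (c : C) : dotv (fun x => a x - c * u x) b = dotv a b - c^* * dotv u b.
Proof.
rewrite /dotv mulr_sumr -sumrB; apply: eq_bigr => x _; rewrite rmorphB rmorphM /=; ring.
Qed.
Lemma dotv_conj a b : (dotv a b)^* = dotv b a.
Proof. by rewrite /dotv rmorph_sum; apply: eq_bigr => x _; rewrite rmorphM /= conjCK mulrC. Qed.
Lemma dot_evr a y : dotv a (ev R y) = (a y)^*.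
Proof.
rewrite /dotv (bigD1 y) //= /ev eqxx mulr1 big1 ?addr0 // => x /negbTE hx.
by rewrite hx mulr0.
Qed.
Lemma dotv_lin a (J : finType) (c : J -> C) (g : J -> T -> C) :
  dotv a (fun z => \sum_y c y * g y z) = \sum_y c y * dotv a (g y).
Proof.
rewrite /dotv; under eq_bigr do rewrite mulr_sumr.
rewrite exchange_big /=; apply: eq_bigr => y _; rewrite mulr_sumr.
by apply: eq_bigr => x _; rewrite mulrCA.
Qed.
End Dot.

Section House.
Variables (Sigma T : finType) (G : gm R Sigma T) (v : T -> C) (q : T).
Hypotheses (hvq : v q != 0) (hsupp : forall x, x \notin gnon G -> v x = 0) (hn : nrm v = 1).

Definition beta : C := (v q)^* / `|v q|.
Definition uH : T -> C := fun x => ev R q x - beta * v x.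
Definition NN : C := dotv uH uH.
Definition kap : C := 2 / NN.
Definition H (P : T -> C) : T -> C := fun x => P x - kap * dotv uH P * uH x.

Lemma hq : q \in gnon G.
Proof. by apply: contraR hvq => /hsupp ->. Qed.

Lemma nvq0 : `|v q| != 0.
Proof. by rewrite normr_eq0. Qed.

Lemma tE : beta * v q = `|v q|.
Proof.
have h := nvq0; have e : (v q)^* * v q = `|v q| ^+ 2 by rewrite normCK mulrC.
by rewrite /beta mulrAC e expr2; field.
Qed.

Lemma tR : (`|v q|)^* = `|v q|.
Proof. exact: conj_normC. Qed.

Lemma bbC : beta * beta^* = 1.
Proof.
have h := nvq0; have e : (v q)^* * v q = `|v q| ^+ 2 by rewrite normCK mulrC.
rewrite /beta rmorphM fmorphV /= conjCK tR.
by rewrite mulrACA e expr2; field.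
Qed.

Lemma dvv : dotv v v = 1.
Proof. by rewrite -nrmC hn rmorph1. Qed.

Lemma NNE : NN = 2 - 2 * `|v q|.
Proof.
rewrite /NN /uH dotv_subr !dotv_subl !dot_ev dot_evr dvv /ev eqxx.
have e1 : beta^* * (v q)^* = `|v q| by rewrite -rmorphM tE; exact: tR.
rewrite e1 /= mulr1n mulr1.
transitivity (1 - `|v q| - beta * v q + beta * beta^*); first by rewrite mulrBr opprB addrA addrAC.
by rewrite tE bbC; ring.
Qed.

Lemma NNR : NN^* = NN.
Proof. by rewrite NNE rmorphB rmorphM /= tR !rmorph_nat. Qed.

Lemma kapR : kap^* = kap.
Proof. by rewrite /kap rmorphM fmorphV /= NNR rmorph_nat. Qed.

Lemma key : kap * kap * NN = 2 * kap.
Proof.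
rewrite /kap; case: (eqVneq NN 0) => [->|h]; first by rewrite invr0 !mulr0 ?mul0r.
by field.
Qed.

Lemma uH_halt x : x \notin gnon G -> uH x = 0.
Proof.
move=> hx; rewrite /uH hsupp // mulr0 subr0 /ev.
by case: eqP => // e; move: hx; rewrite e hq.
Qed.

Lemma H_halt P x : x \notin gnon G -> H P x = P x.
Proof. by move=> hx; rewrite /H uH_halt // mulr0 subr0. Qed.

Lemma H_lin : linC H.
Proof.
move=> J c g; apply: functional_extensionality => x; rewrite /H dotv_lin.
rewrite mulr_sumr mulr_suml -sumrB; apply: eq_bigr => y _; ring.
Qed.

Lemma H_isom : isom H.
Proof.
move=> a b; rewrite /H dotv_subl dotv_subr /= dotv_subr.
rewrite rmorphM /= kapR dotv_conj -/NN.
apply/eqP; rewrite -subr_eq0; apply/eqP.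
transitivity (dotv a uH * dotv uH b * (kap * kap * NN - 2 * kap)); first ring.
by rewrite key subrr mulr0.
Qed.

Lemma H_inv P : H (H P) = P.
Proof.
apply: functional_extensionality => x; rewrite {1}/H /= dotv_subr -/NN /H.
apply/eqP; rewrite -subr_eq0; apply/eqP.
transitivity (dotv uH P * uH x * (kap * kap * NN - 2 * kap)); first ring.
by rewrite key subrr mulr0.
Qed.

Lemma H_ev : H (ev R q) = fun x => beta * v x.
Proof.
apply: functional_extensionality => x; rewrite /H dot_evr.
have uq : (uH q)^* = 1 - `|v q|.
  rewrite /uH /ev eqxx /= mulr1n tE rmorphB rmorph1; congr (_ - _); exact: tR.
rewrite uq.
have -> : kap * (1 - `|v q|) * uH x = uH x.
  case: (eqVneq NN 0) => h.
    have hu : forall y, uH y = 0.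
      apply: nrm_eq0; apply: (@complexI R); by rewrite nrmC -/NN h rmorph0.
    by rewrite hu mulr0.
  rewrite /kap; move: h; rewrite NNE => h.
  have e2 : 2 - 2 * `|v q| = 2 * (1 - `|v q|) by ring.
  have h2 : 1 - `|v q| != 0 by move: h; rewrite e2 mulf_eq0 negb_or => /andP[].
  have h22 : (2:C) != 0 by move: h; rewrite e2 mulf_eq0 negb_or => /andP[].
  have -> : 2 / (2 - 2 * `|v q|) * (1 - `|v q|) = 1.
    by rewrite e2 invfM mulrA divff // mul1r mulVf.
  by rewrite mul1r.
by rewrite /uH; ring.
Qed.

Lemma H_pnon P : H (gpnon G P) = gpnon G (H P).
Proof.
have hd : dotv uH (gpnon G P) = dotv uH P.
  apply: eq_bigr => y _; rewrite /gpnon; case: ifP => // hy.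
  by rewrite uH_halt ?hy // rmorph0 !mul0r.
apply: functional_extensionality => x; rewrite /gpnon.
case: ifP => hx; first by rewrite /H hd /gpnon hx.
by rewrite H_halt ?hx // /gpnon hx.
Qed.

Lemma prb_H (A : {set T}) P : (forall x, x \in A -> x \notin gnon G) -> prb A (H P) = prb A P.
Proof. by move=> hA; apply: eq_bigr => x hx; rewrite H_halt // hA. Qed.


Definition fH (s : option Sigma) (P : T -> C) : T -> C := H (appm (gU G s) (H P)).
Lemma fH_lin s : linC (fH s).
Proof. exact: comp_lin H_lin (comp_lin (appm_lin _) H_lin). Qed.
Lemma fH_isom s : isom (fH s).
Proof. exact: comp_isom H_isom (comp_isom (appm_isom (gcol G s)) H_isom). Qed.
Definition NH : gm R Sigma T := mkgm fH_isom q (gdisj G).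

Lemma NH_acc x : gacp NH x = (grun G (fun y => beta * v y) (rcons (map Some x) None)).1.2.
Proof.
rewrite /gacp /grun.
pose P (gN gM : (T -> C) * R * R) := gN.1.1 = H gM.1.1 /\ gN.1.2 = gM.1.2 /\ gN.2 = gM.2.
suff : P (foldl (gstep NH) (ev R (gq0 NH), 0, 0) (rcons [seq Some i | i <- x] None))
         (foldl (gstep G) ((fun y => beta * v y), 0, 0) (rcons [seq Some i | i <- x] None)).
  by case=> _ [].
apply: foldl_rel; last by split => //=; rewrite -H_ev H_inv.
move=> [[Q a] r] [[w b] c] s [/= -> [-> ->]] /=.
have happ : appm (gU NH s) (H w) = H (appm (gU G s) w).
  by rewrite mkU_app; [rewrite /fH H_inv | exact: fH_lin].
rewrite happ; split; [|split].
- by rewrite H_pnon.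
- congr (_ + _); apply: prb_H => y hy; by rewrite in_gnon hy.
- congr (_ + _); apply: prb_H => y hy; by rewrite in_gnon hy andbF.
Qed.

End House.
End Gen4.


Section Gen5.
Variable R : realType.
Local Notation C := (R[i]).
Local Notation toC := (real_complex R).

Lemma ineq1 (n p a lam e : R) : 0 < n -> lam + e < a + n * p -> (lam - a) / n + e / n < p.
Proof. by move=> hn h; rewrite -mulrDl ltr_pdivrMr //; lra. Qed.

Lemma ineq2 (n p a lam e : R) : 0 < n -> a + n * p < lam - e -> p < (lam - a) / n - e / n.
Proof. by move=> hn h; rewrite -mulrBl ltr_pdivlMr //; lra. Qed.

Lemma ineq3 (n e : R) : 0 < n -> n <= 1 -> 0 < e -> e <= e / n.
Proof. by move=> hn h1 he; rewrite ler_pdivlMr //; nra. Qed.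

Variables (Sigma T : finType) (G : gm R Sigma T).

Lemma supp_grun l (v : T -> C) : (forall y, y \notin gnon G -> v y = 0) ->
  forall y, y \notin gnon G -> (grun G v l).1.1 y = 0.
Proof.
elim: l v => [|s l IH] v hv y hy; first exact: hv.
rewrite grun_cons /=; apply: IH hy => z hz; by rewrite /gpnon (negbTE hz).
Qed.

Lemma grun_cat (v : T -> C) l1 l2 :
  (grun G v (l1 ++ l2)).1.2 = (grun G v l1).1.2 + (grun G (grun G v l1).1.1 l2).1.2.
Proof.
rewrite {1}/grun foldl_cat.
have -> : foldl (gstep G) (v, 0, 0) l1 = ((grun G v l1).1.1, (grun G v l1).1.2, (grun G v l1).2).
  by rewrite /grun; case: (foldl _ _ _) => [[]].
by rewrite foldl_gstep.
Qed.

Lemma nrm_scl (c : C) (v : T -> C) : nrm (scl c v) = sqmod c * nrm v.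
Proof. by rewrite /nrm mulr_sumr; apply: eq_bigr => x _; rewrite sqmodM. Qed.

Lemma lq (L : seq Sigma -> Prop) lam e eps w : eps <= e -> gaccepts G L lam e ->
  RMM eps (fun x => L (w ++ x)).
Proof.
move=> he [e0 hacc].
case: w => [|a w']; first exact: (RMM_of_gm (G := G) (lam := lam) he).
set w := a :: w'.
set l0 := map Some w.
have hsplit : forall x, gacp G (w ++ x) =
   (grun G (ev R (gq0 G)) l0).1.2 + (grun G (grun G (ev R (gq0 G)) l0).1.1 (rcons (map Some x) None)).1.2.
  by move=> x; rewrite /gacp map_cat rcons_cat grun_cat.
have hc := conserv G l0 (ev R (gq0 G)); rewrite nrm_ev in hc.
have [haw hrw] := grun_ge0 G l0 (ev R (gq0 G)).
have hsupp : forall y, y \notin gnon G -> (grun G (ev R (gq0 G)) l0).1.1 y = 0.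
  move=> y hy; rewrite /l0 /w /= grun_cons /=; apply: supp_grun hy => z hz.
  by rewrite /gpnon (negbTE hz).
move: hsplit hc haw hrw hsupp; case: (grun G _ l0) => [[psi aw] rw] /= hsplit hc haw hrw hsupp.
set n := nrm psi.
have hn0 : 0 <= n := nrm_ge0 psi.
case: (eqVneq n 0) => hn.
  have hz : forall l, (grun G psi l).1.2 = 0.
    move=> l; have -> : psi = scl 0 psi.
      by apply: functional_extensionality => y; rewrite /scl mul0r (nrm_eq0 hn).
    by have [_ [-> _]] := grun_scl G 0 l psi; rewrite sqmod0 mul0r.
  have hw : forall x, gacp G (w ++ x) = aw by move=> x; rewrite hsplit hz addr0.
  case: (ltrP lam aw) => hl.
    apply: (RMM_of_gm (G := G) (lam := -1 - e) he); split => // x; split => hx.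
      by have := gacp_bounds G x => /andP [h0 _]; lra.
    by have := (hacc (w ++ x)).2 hx; rewrite hw; lra.
  apply: (RMM_of_gm (G := G) (lam := 2 + e) he); split => // x; split => hx.
    by have := (hacc (w ++ x)).1 hx; rewrite hw; lra.
  by have := gacp_bounds G x => /andP [_ h1]; lra.
have hnp : 0 < n by rewrite lt_def hn hn0.
have [q hq] : exists q, psi q != 0.
  case: (pickP (fun y => psi y != 0)) => [q hq|h0]; first by exists q.
  move: hn; rewrite /n /nrm big1 ?eqxx // => y _.
  by move: (h0 y) => /= /negbFE /eqP ->; rewrite sqmod0.
set g := toC ((Num.sqrt n)^-1).
have hs : 0 < Num.sqrt n by rewrite sqrtr_gt0.
have hg : g != 0.
  by rewrite /g (inj_eq (@complexI R)) invr_eq0 gt_eqF.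
set v := scl g psi.
have hvq : v q != 0 by rewrite /v /scl mulf_neq0.
have hvs : forall y, y \notin gnon G -> v y = 0 by move=> y hy; rewrite /v /scl hsupp // mulr0.
have hsg : sqmod g = n^-1.
  by rewrite /g sqmod_real exprVn sqr_sqrtr.
have hvn : nrm v = 1 by rewrite /v nrm_scl hsg mulVf.
have hb : sqmod (beta v q) = 1.
  by apply: (@complexI R); rewrite sqmodC bbC ?rmorph1.
have hN : forall x, gacp G (w ++ x) = aw + n * gacp (NH G hvq hvn) x.
  move=> x; rewrite hsplit (NH_acc hvq hvs hvn).
  have -> : (fun y => beta v q * v y) = scl (beta v q * g) psi.
    by apply: functional_extensionality => y; rewrite /v /scl mulrA.
  have [_ [-> _]] := grun_scl G (beta v q * g) (rcons (map Some x) None) psi.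
  by rewrite sqmodM hb hsg mul1r mulrA mulfV ?mul1r.
apply: (RMM_of_gm (G := NH G hvq hvn) (lam := (lam - aw) / n) (e := e / n)).
  apply: le_trans he _; apply: ineq3 => //; rewrite /n; lra.
split; first by rewrite divr_gt0.
move=> x; split => hx.
  by apply: ineq1 => //; rewrite -hN; exact: (hacc (w ++ x)).1.
by apply: ineq2 => //; rewrite -hN; exact: (hacc (w ++ x)).2.
Qed.

End Gen5.

Theorem theorem4p1 (R : realType) (Sigma : finType) (eps : R)
  (L : seq Sigma -> Prop) :
  RMM eps L ->
  [/\ RMM eps (fun x => ~ L x),
      (forall h : seq Sigma -> seq Sigma, monoid_hom h -> RMM eps (fun x => L (h x))),
      (forall w : seq Sigma, RMM eps (fun x => L (w ++ x)))
    & (forall w : seq Sigma, RMM eps (fun x => L (x ++ w)))].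
Proof.
move=> hL; have [M [lam [e [he [e0 hacc]]]]] := gm_of_RMM hL.
set G := ofM M.
split.
- apply: (RMM_of_gm (G := NC G) (lam := 1 - lam) (e := e) he); split => // x.
  rewrite NC_acc; split => hx.
    by have := (hacc x).2 hx; lra.
  have hx' : L x by apply: NNPP.
  by have := (hacc x).1 hx'; lra.
- move=> h hh; apply: (RMM_of_gm (G := NS G (gHom h)) (lam := lam) (e := e) he).
  by split => // x; rewrite NS_hom //; exact: hacc.
- move=> w; apply: (@lq R Sigma _ G L lam e eps w he); exact: (conj e0 hacc).
- move=> w; apply: (RMM_of_gm (G := NS G (gRq w)) (lam := lam) (e := e) he).
  by split => // x; rewrite NS_rq; exact: hacc.
Qed.
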